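(* Let $u,v\in\{0,1,2\}^*$ with $\theta(u),\theta(v)\in\{0,1,\dots,7\}$. If $\theta(u)=\theta(v)$, then $\lambda_{ua}=\lambda_{va}$ and $s_{ua}=s_{va}$ for every $a\in\{0,1,2\}$.
   Context: Fibonacci numbers: $F_0=1$, $F_1=2$, $F_n=F_{n-1}+F_{n-2}$ for $n\ge2$ (so $F_2=3$). For a word $w=w_{k-1}\cdots w_0$ over $\{0,1,2\}$ (digits indexed from the right), $\mathrm{val}_{\mathcal{F}}(w)=\sum_{i=0}^{k-1}w_iF_i$. $\mathcal{S}=\{000,001,010,100,101\}$. Let $u\mapsto w_u\in\{0,1\}^*$ (length-preserving) and $u\mapsto s_u\in\mathcal{S}$ be the unique maps on $\{0,1,2\}^*$ such that $w_u$ is a prefix of $w_{ua}$ for every letter $a\in\{0,1,2\}$ and $\mathrm{val}_{\mathcal{F}}(u)=\mathrm{val}_{\mathcal{F}}(w_us_u)$ for all $u$; and let $\lambda_{ua}\in\{0,1\}$ be defined by $w_{ua}=w_u\lambda_{ua}$. Define $\theta:\{0,1,2\}^*\to\mathbb{Z}$ by $\theta(\varepsilon)=0$ and $\theta(ua)=\mathrm{val}_{\mathcal{F}}(s_u)+\mathrm{val}_{\mathcal{F}}(s_{ua})-F_2\lambda_{ua}+a$ for $u\in\{0,1,2\}^*$, $a\in\{0,1,2\}$. *)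

(* Defs.v *)
From mathcomp Require Import all_boot all_order all_algebra.
Set Implicit Arguments. Unset Strict Implicit. Unset Printing Implicit Defensive.
Import GRing.Theory Num.Theory.

(* Words are sequences written left to right: the word w_{k-1} ... w_0 is the
   sequence [:: w_{k-1}; ...; w_0]; so the rightmost digit (index 0) is the
   last element, and appending a letter a on the right ("ua") is rcons u a. *)

Fixpoint fib (n : nat) : nat :=
  match n with
  | 0 => 1
  | 1 => 2
  | (S ((S m) as k)) => fib k + fib m
  end.

Definition valF (w : seq nat) : nat :=
  \sum_(i < size w) nth 0 (rev w) i * fib i.

Definition valD (u : seq 'I_3) : nat := valF (map (fun x : 'I_3 => nat_of_ord x) u).
Definition valB (w : seq bool) : nat := valF (map nat_of_bool w).

Definition Sset : seq (seq bool) :=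
  [:: [:: false; false; false]; [:: false; false; true]; [:: false; true; false];
      [:: true; false; false]; [:: true; false; true]].

Definition is_normalizer (w : seq 'I_3 -> seq bool) (s : seq 'I_3 -> seq bool) : Prop :=
  [/\ forall u, size (w u) = size u,
      forall u, s u \in Sset,
      forall u a, prefix (w u) (w (rcons u a))
    & forall u, valD u = valB (w u ++ s u)].

(* lambda_{ua}: the last letter of w_{ua} (w_{ua} = w_u lambda_{ua}) *)
Definition lam (w : seq 'I_3 -> seq bool) (u : seq 'I_3) (a : 'I_3) : bool :=
  last false (w (rcons u a)).

Definition theta (w : seq 'I_3 -> seq bool) (s : seq 'I_3 -> seq bool)
    (x : seq 'I_3) : int :=
  match x with
  | [::] => 0%R
  | y :: t =>
      let u := belast y t in
      let a := last y t in
      ((valB (s u))%:Z + (valB (s (rcons u a)))%:Z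
        - (fib 2 * lam w u a)%:Z + (nat_of_ord a)%:Z)%R
  end.

(* Main.v *)
Require Import Defs.
From mathcomp Require Import all_boot all_order all_algebra.
From mathcomp Require Import zify.
Import GRing.Theory Num.Theory.

Definition G k (c : seq nat) := \sum_(i < size c) nth 0 (rev c) i * fib (i + k).

Lemma valF_nat (c : seq nat) : valF c = \sum_(0 <= i < size c) nth 0 (rev c) i * fib i.
Proof. by rewrite /valF big_mkord. Qed.

Lemma G_nat k (c : seq nat) : G k c = \sum_(0 <= i < size c) nth 0 (rev c) i * fib (i + k).
Proof. by rewrite /G big_mkord. Qed.

Lemma valF_cat c d : valF (c ++ d) = G (size d) c + valF d.
Proof.
rewrite valF_nat G_nat valF_nat size_cat addnC.
rewrite (@big_cat_nat _ _ _ (size d) 0 (size d + size c)) ?leq_addr //= addnC.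
congr (_ + _).
  rewrite -{1}(add0n (size d)) big_addn addKn; apply: eq_bigr => i _.
  by rewrite rev_cat nth_cat size_rev ltnNge leq_addl /= addnK.
apply: eq_big_nat => i /andP [_ Hi].
by rewrite rev_cat nth_cat size_rev Hi.
Qed.

Lemma G_rec k c : G k.+2 c = G k.+1 c + G k c.
Proof.
rewrite /G -big_split; apply: eq_bigr => i _.
by rewrite !addnS /= mulnDr.
Qed.

Lemma valF_cons x d : valF (x :: d) = x * fib (size d) + valF d.
Proof.
rewrite -cat1s valF_cat; congr (_ + _).
by rewrite /G big_ord_recl big_ord0 /= addn0.
Qed.

Lemma valF_nil : valF [::] = 0.
Proof. by rewrite /valF big_ord0. Qed.

Lemma valB_Sset s : s \in Sset -> valB s = index s Sset.
Proof.
rewrite !inE => H.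
by repeat (case/orP: H => [/eqP->|H]; first by rewrite /valB /= !valF_cons valF_nil);
  move/eqP: H => ->; rewrite /valB /= !valF_cons valF_nil.
Qed.

Lemma size_Sset s : s \in Sset -> size s = 3.
Proof.
rewrite !inE => H.
by repeat (case/orP: H => [/eqP->|H]; first by []); move/eqP: H => ->.
Qed.

Lemma inj_S (b1 b2 : bool) s1 s2 : s1 \in Sset -> s2 \in Sset ->
  5 * b1 + valB s1 = 5 * b2 + valB s2 -> b1 = b2 /\ s1 = s2.
Proof.
move=> H1 H2; rewrite !valB_Sset //.
have L1 : index s1 Sset < 5 by rewrite -index_mem in H1.
have L2 : index s2 Sset < 5 by rewrite -index_mem in H2.
move=> E.
have Eb : b1 = b2.
  move: (index s1 Sset) (index s2 Sset) L1 L2 E => i j.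
  by case: b1 b2 => [] [] //= *; exfalso; lia.
split=> //; subst b2.
have Ei : index s1 Sset = index s2 Sset by lia.
by rewrite -(nth_index [::] H1) -(nth_index [::] H2) Ei.
Qed.

Section Main.
Variables (w : seq 'I_3 -> seq bool) (s : seq 'I_3 -> seq bool).
Hypothesis N : is_normalizer w s.

Lemma w_rcons u a : w (rcons u a) = rcons (w u) (lam w u a).
Proof.
case: N => Hs _ Hp _.
case/prefixP: (Hp u a) => t Et.
have : size t = 1.
  by have := Hs (rcons u a); rewrite Et size_cat Hs size_rcons -[(size u).+1]addn1 => /eqP; rewrite eqn_add2l => /eqP.
case: t Et => [|x [|]] //= Et _.
by rewrite /lam Et cats1 last_rcons.
Qed.

Lemma w_nil : w [::] = [::].
Proof. by case: N => Hs _ _ _; apply/size0nil; rewrite Hs. Qed.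

Lemma valD_cat u d : valD (u ++ d) = G (size d) (map (fun x : 'I_3 => nat_of_ord x) u) + valD d.
Proof. by rewrite /valD map_cat valF_cat size_map. Qed.

Lemma key_nil a : 5 * lam w [::] a + valB (s [:: a]) = a.
Proof.
case: N => _ HS _ Hv.
have := Hv [:: a]; rewrite -[[:: a]]/(rcons [::] a) w_rcons w_nil /=.
rewrite /valB /= valF_cons size_map size_Sset // => H.
have Ha : valD [:: a] = a by rewrite /valD /= valF_cons valF_nil /= muln1 addn0.
rewrite Ha in H; rewrite H /=; lia.
Qed.

Lemma key u b a : 5 * lam w (rcons u b) a + valB (s (rcons (rcons u b) a))
  + 3 * lam w u b = valB (s u) + valB (s (rcons u b)) + b + a.
Proof.
case: N => _ HS _ Hv.
have H0 := Hv u; have H1 := Hv (rcons u b); have H2 := Hv (rcons (rcons u b) a).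
rewrite !w_rcons in H1 H2.
have Sx := @size_Sset _ (HS u); have Sy := @size_Sset _ (HS (rcons u b));
have Sz := @size_Sset _ (HS (rcons (rcons u b) a)).
move: H0 H1 H2 Sx Sy Sz.
set x := s u; set y := s (rcons u b); set z := s (rcons (rcons u b) a).
set l1 := lam w u b; set l2 := lam w (rcons u b) a.
rewrite !cat_rcons -!cats1 -catA /=.
rewrite /valB !map_cat !valF_cat /= !valF_cons !size_map.
move=> H0 H1 H2 Sx Sy Sz.
rewrite (_ : size (_ :: _) = 4) in H2; last by rewrite /= size_map Sz.
rewrite /= Sx Sy Sz in H0 H1 H2.
rewrite (valD_cat u [:: b]) (valD_cat u [:: b; a]) in H1 H2.
rewrite /valD /= !valF_cons valF_nil /= in H1 H2.
have E0 : valD u = G 0 (map (fun x : 'I_3 => nat_of_ord x) u).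
  by rewrite /valD -{1}(cats0 (map _ u)) valF_cat valF_nil addn0.
have g1 := G_rec 0 (map (fun x : 'I_3 => nat_of_ord x) u).
have g2 := G_rec 3 (map nat_of_bool (w u)).
rewrite /= in H0 H1 H2 g1 g2 *.
lia.
Qed.


End Main.

Theorem lemma5p6 (w : seq 'I_3 -> seq bool) (s : seq 'I_3 -> seq bool) :
  is_normalizer w s ->
  forall u v : seq 'I_3,
    (0 <= theta w s u <= 7)%R ->
    (0 <= theta w s v <= 7)%R ->
    theta w s u = theta w s v ->
    forall a : 'I_3,
      lam w u a = lam w v a /\ s (rcons u a) = s (rcons v a).
Proof.
move=> N.
have Ht : forall u (a : 'I_3), (theta w s u + Posz (nat_of_ord a))%R
    = Posz (5 * lam w u a + valB (s (rcons u a))).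
  move=> [|y t] a /=.
    by rewrite (@key_nil w s N a) add0r.
  have := @key w s N (belast y t) (last y t) a.
  rewrite -lastI /= => E.
  lia.
move=> u v _ _ E a.
have HS := (let: And4 _ h _ _ := N in h).
apply: inj_S; rewrite ?HS //.
have := Ht u a; have := Ht v a; rewrite E; lia.
Qed.
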